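(* Fix $\alpha>1$, $R>0$, an integer $T>1$, $G_c>0$, $N_0>0$ and $\beta,\delta,\mu>0$. For $\rho_r>0$ put $\Theta(\rho_r)=(\alpha,\rho_r,\beta\rho_r,\delta\rho_r,\mu\rho_r,T)$ and $\eta^\star_{zf}(R,\Theta)=\frac{G_c}{N_0}\zeta^\star_{zf}(R,\Theta)$. If $\rho_{r_2}>\rho_{r_1}>0$, then $\eta^\star_{zf}(R,\Theta(\rho_{r_1}))>\eta^\star_{zf}(R,\Theta(\rho_{r_2}))$.
   Context: For $\Theta=(\alpha,\rho_r,\rho_d,\rho_s,\rho_0,T)$ and $M>K$, $1\le K\le\tau<T$ let $$\gamma_u=\frac{K+\tau}{2\tau(M-K)}\Big(2^{\frac{R}{K(1-\tau/T)}}-1\Big)+\sqrt{\Big(\frac{K+\tau}{2\tau(M-K)}\Big(2^{\frac{R}{K(1-\tau/T)}}-1\Big)\Big)^2+\frac{2^{\frac{R}{K(1-\tau/T)}}-1}{\tau(M-K)}},$$ $$\frac{R}{\zeta_{zf}(M,K,\tau,R,\Theta)}=\alpha K\gamma_u+\rho_s+K\Big(\rho_d+\frac{8K^2\rho_0}{3T}\Big)+M\Big(\rho_r+2K\rho_0+\frac{4K^2\rho_0}{T}\Big).$$ $\zeta^\star_{zf}(R,\Theta)$ is the maximum of $\zeta_{zf}$ over integers $(M,K,\tau)$ with $1\le K\le\tau<T$, $M>K$. *)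

(* Defs.v *)
From HB Require Import structures.
From mathcomp Require Import all_boot all_order all_algebra.
From mathcomp Require Import all_classical all_reals exp.
Set Implicit Arguments. Unset Strict Implicit. Unset Printing Implicit Defensive.
Import Order.TTheory GRing.Theory Num.Theory.
Local Open Scope ring_scope.
Local Open Scope classical_set_scope.

Section Defs.
Variable R : realType.

Definition snr_term (K tau T : nat) (Rt : R) : R :=
  2 `^ (Rt / (K%:R * (1 - tau%:R / T%:R))) - 1.

Definition gamma_u (M K tau T : nat) (Rt : R) : R :=
  let c := (K%:R + tau%:R) / (2 * tau%:R * (M%:R - K%:R)) * snr_term K tau T Rt in
  c + Num.sqrt (c ^+ 2 + snr_term K tau T Rt / (tau%:R * (M%:R - K%:R))).

Definition zeta_zf (M K tau : nat) (Rt alpha rho_r rho_d rho_s rho_0 : R) (T : nat) : R :=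
  Rt / (alpha * K%:R * gamma_u M K tau T Rt + rho_s
        + K%:R * (rho_d + 8 * K%:R ^+ 2 * rho_0 / (3 * T%:R))
        + M%:R * (rho_r + 2 * K%:R * rho_0 + 4 * K%:R ^+ 2 * rho_0 / T%:R)).

Definition feasible (M K tau T : nat) : bool :=
  [&& (1 <= K)%N, (K <= tau)%N, (tau < T)%N & (K < M)%N].

(* zeta^star: maximum (taken as the supremum, which is attained) of zeta_zf
   over integer (M,K,tau) with 1 <= K <= tau < T, M > K. *)
Definition zeta_star (Rt alpha rho_r rho_d rho_s rho_0 : R) (T : nat) : R :=
  sup [set z | exists M K tau, feasible M K tau T /\
                 z = zeta_zf M K tau Rt alpha rho_r rho_d rho_s rho_0 T].

Definition eta_star (Gc N0 Rt alpha beta delta mu rho_r : R) (T : nat) : R :=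
  Gc / N0 * zeta_star Rt alpha rho_r (beta * rho_r) (delta * rho_r) (mu * rho_r) T.

End Defs.

(* Main.v *)
Require Import Defs.
From HB Require Import structures.
From mathcomp Require Import all_boot all_order all_algebra.
From mathcomp Require Import all_classical all_reals exp.
From mathcomp Require Import ring lra zify.
Import Order.TTheory GRing.Theory Num.Theory.
Local Open Scope ring_scope.
Local Open Scope classical_set_scope.

Lemma den_split (R : realType) (A alpha beta delta mu k m t r : R) :
  A + delta * r + k * (beta * r + 8 * k ^+ 2 * (mu * r) / (3 * t))
   + m * (r + 2 * k * (mu * r) + 4 * k ^+ 2 * (mu * r) / t)
  = A + r * (delta + k * (beta + 8 * k ^+ 2 * mu / (3 * t))
       + m * (1 + 2 * k * mu + 4 * k ^+ 2 * mu / t)).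
Proof. ring. Qed.

Lemma B_ge (R : realType) (beta delta mu k m t : R) :
  0 <= beta -> 0 < delta -> 0 <= mu -> 0 <= k -> 0 <= m -> 0 < t ->
  delta <= delta + k * (beta + 8 * k ^+ 2 * mu / (3 * t))
       + m * (1 + 2 * k * mu + 4 * k ^+ 2 * mu / t).
Proof.
move=> hb hd hm hk hM ht.
have h1 : 0 <= 8 * k ^+ 2 * mu / (3 * t).
  by apply: divr_ge0; [rewrite !mulr_ge0 ?exprn_ge0 | rewrite mulr_ge0 ?ltW].
have h2 : 0 <= 4 * k ^+ 2 * mu / t.
  by apply: divr_ge0; [rewrite !mulr_ge0 ?exprn_ge0 | rewrite ltW].
have h3 : 0 <= k * (beta + 8 * k ^+ 2 * mu / (3 * t)) by rewrite mulr_ge0 // addr_ge0.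
have h4 : 0 <= m * (1 + 2 * k * mu + 4 * k ^+ 2 * mu / t).
  by rewrite mulr_ge0 // !addr_ge0 // !mulr_ge0.
lra.
Qed.

Lemma gamma_ge0 (R : realType) M K tau T (Rt : R) :
  0 < Rt -> feasible M K tau T -> 0 <= gamma_u M K tau T Rt.
Proof.
move=> hR /and4P[h1 h2 h3 h4].
have hK : (0:R) < K%:R by rewrite ltr0n.
have htT : (0:R) < 1 - tau%:R / T%:R.
  rewrite subr_gt0 ltr_pdivrMr ?mul1r ?ltr_nat //; rewrite ltr0n; lia.
have hs : 0 <= snr_term K tau T Rt.
  rewrite /snr_term subr_ge0.
  have := @ler_powR R 2 (ler1n _ 2) 0 (Rt / (K%:R * (1 - tau%:R / T%:R))).
  rewrite powRr0; apply.
  by rewrite ltW // divr_gt0 // mulr_gt0.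
have hMK : (0:R) < M%:R - K%:R by rewrite subr_gt0 ltr_nat.
have ht : (0:R) < tau%:R by rewrite ltr0n; lia.
rewrite /gamma_u /=.
set c := _ * snr_term _ _ _ _.
have hx : 0 <= snr_term K tau T Rt / (tau%:R * (M%:R - K%:R)).
  by rewrite divr_ge0 // mulr_ge0 // ltW.
have : `|c| <= Num.sqrt (c ^+ 2 + snr_term K tau T Rt / (tau%:R * (M%:R - K%:R))).
  by rewrite -sqrtr_sqr ler_sqrt ?lerDl // addr_ge0 ?sqr_ge0.
have := ler_norm (- c); rewrite normrN. lra.
Qed.

Lemma divle (R : realType) (Rt X Y : R) : 0 < Rt -> 0 < Y -> Y <= X -> Rt / X <= Rt / Y.
Proof.
move=> hR hY hYX; have hX : 0 < X by apply: lt_le_trans hYX.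
by rewrite ler_pM2l // lef_pV2 // posrE.
Qed.

Lemma key (R : realType) (Rt s D1 D2 e : R) : 0 < Rt -> 0 < s -> 0 < e -> 0 < D1 ->
  Rt / D1 <= s -> D1 + e <= D2 -> Rt / D2 <= Rt * s / (Rt + e * s).
Proof.
move=> hR hs he hD1 h1 h2.
have hD2 : 0 < D2 by lra.
have hq : 0 < Rt + e * s by rewrite addr_gt0 // mulr_gt0.
rewrite ler_pdivrMr // in h1.
rewrite ler_pdivrMr // mulrAC ler_pdivlMr //.
have p1 : 0 <= Rt * (s * D1 - Rt) by apply: mulr_ge0; lra.
have p2 : 0 <= Rt * s * (D2 - (D1 + e)) by apply: mulr_ge0; [apply: mulr_ge0|]; lra.
nra.
Qed.

Definition zA {R : realType} M K tau T (Rt alpha : R) := alpha * K%:R * gamma_u M K tau T Rt.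
Definition zB {R : realType} M K T (beta delta mu : R) :=
  delta + K%:R * (beta + 8 * K%:R ^+ 2 * mu / (3 * T%:R))
       + M%:R * (1 + 2 * K%:R * mu + 4 * K%:R ^+ 2 * mu / T%:R).

Lemma zeta_form (R : realType) M K tau T (Rt alpha beta delta mu r : R) :
  0 < Rt -> 1 < alpha -> 0 < beta -> 0 < delta -> 0 < mu -> (1 < T)%N ->
  feasible M K tau T ->
  [/\ 0 <= zA M K tau T Rt alpha, delta <= zB M K T beta delta mu &
   zeta_zf M K tau Rt alpha r (beta * r) (delta * r) (mu * r) T
   = Rt / (zA M K tau T Rt alpha + r * zB M K T beta delta mu)].
Proof.
move=> hR ha hb hd hm hT hf.
split.
- by rewrite /zA !mulr_ge0 ?gamma_ge0 // ltW // (lt_trans ltr01).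
- apply: B_ge; [exact: ltW| done | exact: ltW | exact: ler0n | exact: ler0n | rewrite ltr0n; lia].
- by rewrite /zeta_zf den_split.
Qed.

Theorem corollary2 (R : realType) (alpha Rt Gc N0 beta delta mu rho1 rho2 : R)
  (T : nat) :
  1 < alpha -> 0 < Rt -> (1 < T)%N -> 0 < Gc -> 0 < N0 ->
  0 < beta -> 0 < delta -> 0 < mu ->
  0 < rho1 -> rho1 < rho2 ->
  eta_star Gc N0 Rt alpha beta delta mu rho2 T
    < eta_star Gc N0 Rt alpha beta delta mu rho1 T.
Proof.
move=> ha hR hT hG hN hb hd hm h1 h12.
rewrite /eta_star ltr_pM2l ?divr_gt0 //.
rewrite /zeta_star.
set S2 := [set z | _ ].
set S1 := [set z | _ ].
have f0 : feasible 2 1 1 T by rewrite /feasible hT.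
have ne1 : S1 !=set0 by exists (zeta_zf 2 1 1 Rt alpha rho1 (beta * rho1) (delta * rho1) (mu * rho1) T); by exists 2%N, 1%N, 1%N.
have ne2 : S2 !=set0 by exists (zeta_zf 2 1 1 Rt alpha rho2 (beta * rho2) (delta * rho2) (mu * rho2) T); by exists 2%N, 1%N, 1%N.
have ub1 : has_ubound S1.
  exists (Rt / (rho1 * delta)) => z [M [K [tau [hf ->]]]].
  have [hA hB ->] := @zeta_form _ M K tau T Rt alpha beta delta mu rho1 hR ha hb hd hm hT hf.
  set A := zA _ _ _ _ _ _ in hA *; set B := zB _ _ _ _ _ _ in hB *.
  apply: divle => //; first by rewrite mulr_gt0.
  have : rho1 * delta <= rho1 * B by rewrite ler_pM2l.
  lra.
have pos : forall M K tau r, 0 < r -> feasible M K tau T ->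
    0 < zeta_zf M K tau Rt alpha r (beta * r) (delta * r) (mu * r) T.
  move=> M K tau r hr hf.
  have [hA hB ->] := @zeta_form _ M K tau T Rt alpha beta delta mu r hR ha hb hd hm hT hf.
  set A := zA _ _ _ _ _ _ in hA *; set B := zB _ _ _ _ _ _ in hB *.
  rewrite divr_gt0 //.
  have : 0 < r * B by rewrite mulr_gt0 //; lra.
  lra.
have z0pos := pos 2%N 1%N 1%N rho1 h1 f0.
have s1pos : 0 < sup S1.
  apply: lt_le_trans z0pos _; apply: (ub_le_sup ub1); by exists 2%N, 1%N, 1%N.
have epos : 0 < (rho2 - rho1) * delta by rewrite mulr_gt0 // subr_gt0.
apply: (@le_lt_trans _ _ (Rt * sup S1 / (Rt + (rho2 - rho1) * delta * sup S1))).
  apply: (ge_sup ne2) => z [M [K [tau [hf ->]]]].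
  have [hA hB ->] := @zeta_form _ M K tau T Rt alpha beta delta mu rho2 hR ha hb hd hm hT hf.
  have [_ _ e1] := @zeta_form _ M K tau T Rt alpha beta delta mu rho1 hR ha hb hd hm hT hf.
  set A := zA _ _ _ _ _ _ in hA e1 *; set B := zB _ _ _ _ _ _ in hB e1 *.
  have hB0 : 0 < B by lra.
  apply: (@key _ Rt (sup S1) (A + rho1 * B)) => //.
  - have : 0 < rho1 * B by rewrite mulr_gt0.
    lra.
  - rewrite -e1; apply: (ub_le_sup ub1); by exists M, K, tau.
  - have : (rho2 - rho1) * delta <= (rho2 - rho1) * B by rewrite ler_pM2l // subr_gt0.
    lra.
have hq : 0 < Rt + (rho2 - rho1) * delta * sup S1 by rewrite addr_gt0 // mulr_gt0.
rewrite ltr_pdivrMr //.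
have := mulr_gt0 (mulr_gt0 epos s1pos) s1pos.
nra.
Qed.
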